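(* Let $D$ be a smooth regular distribution with unbounded virtual value function. Suppose a generalized position auction with single-agent allocation rules $(x^{(t)})_{t\in\mathbb N}$ satisfies, for all $t\in\mathbb N$ and $w\ge0$, $$t\,(x^{(t)}(w)-x^{(t+1)}(w))\ge(t+1)\,(x^{(t+1)}(w)-x^{(t+2)}(w)),$$ and, for all $t\in\mathbb N$ and $w\ge\varphi^{-1}(0)$, $$t\int_{\varphi^{-1}(0)}^{w}\bigl(x^{(t)}(z)-x^{(t+1)}(z)\bigr)dz\le\varphi(w)x^{(t+1)}(w)-\int_{\varphi^{-1}(0)}^{w}x^{(t+1)}(z)\,d\varphi(z).$$ Then the mechanism is on-chain miner simple (and hence simple to participate).
   Context: Users ($n\in\mathbb N$ arbitrary) have private values drawn i.i.d. from $D$ on $\mathbb R_{\ge0}$ with CDF $F$, density $f$, virtual value $\varphi(v)=v-\frac{1-F(v)}{f(v)}$; $D$ smooth regular means $\varphi$ non-decreasing and continuous with $\Pr[\varphi(v)\le0]>0$; $\varphi^{-1}(\phi)$ denotes the supremum of values $v$ with $\varphi(v)<\phi$. $\int_{\varphi^{-1}(0)}^{w}g(z)\,d\varphi(z)$ is the Riemann–Stieltjes integral with respect to $\varphi$. A generalized position auction (a prior-dependent plaintext TFM with infinite block, no advice) is given by functions $x^{(t)}:\mathbb R_{\ge0}\to[0,1]$, each non-decreasing, with $x^{(t)}(v)\ge x^{(t+1)}(v)$ and $x^{(t)}(v)=0$ when $\varphi(v)<0$; with bids sorted $v^{(1)}\ge\dots\ge v^{(n)}$ and $v^{(n+1)}:=\varphi^{-1}(0)$,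 user $(i)$ is allocated with probability $x^{(i)}(v^{(i)})$ and pays $v^{(i)}x^{(i)}(v^{(i)})-\sum_{j=i}^n\int_{v^{(j+1)}}^{v^{(j)}}x^{(j)}(z)dz$, and the burn is $\sum_{i=1}^n\bigl[\varphi(v^{(i)})x^{(i)}(v^{(i)})-\int_{\varphi^{-1}(0)}^{v^{(i)}}x^{(i)}(z)\,d\varphi(z)\bigr]$; such mechanisms are on-chain user simple and off-chain influence proof. On-chain miner simple: given truthful bids, the miner (who sees bids and may censor bids and insert fabricated bids, earning real users' payments minus burn) maximizes revenue by never censoring or fabricating, for every bid profile. Simple to participate: on-chain user simple, on-chain miner simple and off-chain influence proof. *)

(* Defs.v *)
From Stdlib Require Import Reals List Sorting.Sorted Permutation ClassicalEpsilon.
From Coquelicot Require Import Coquelicot.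
Open Scope R_scope.

Definition sumR (f : nat -> R) (a len : nat) : R :=
  fold_right Rplus 0 (map f (seq a len)).

Definition tagged_partition (a b : R) (m : nat) (p xi : nat -> R) : Prop :=
  p 0%nat = a /\ p m = b /\
  (forall i, (i < m)%nat -> p i <= xi i <= p (S i)).

Definition mesh_lt (m : nat) (p : nat -> R) (d : R) : Prop :=
  forall i, (i < m)%nat -> p (S i) - p i < d.

Definition RS_sum (g phi : R -> R) (m : nat) (p xi : nat -> R) : R :=
  sumR (fun i => g (xi i) * (phi (p (S i)) - phi (p i))) 0 m.

Definition is_RS_integral (g phi : R -> R) (a b I : R) : Prop :=
  forall eps, 0 < eps -> exists delta, 0 < delta /\
    forall m p xi, tagged_partition a b m p xi -> mesh_lt m p delta ->
      Rabs (RS_sum g phi m p xi - I) < eps.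

Definition RS_int_ord (g phi : R -> R) (a b : R) : R :=
  match excluded_middle_informative (exists I, is_RS_integral g phi a b I) with
  | left H => proj1_sig (constructive_indefinite_description _ H)
  | right _ => 0
  end.

Definition RS_int (g phi : R -> R) (a b : R) : R :=
  if Rle_dec a b then RS_int_ord g phi a b else - RS_int_ord g phi b a.

Definition is_distribution (F f : R -> R) : Prop :=
  (forall v, 0 <= f v) /\
  (forall v, 0 <= v -> ex_RInt f 0 v /\ F v = RInt f 0 v) /\
  is_lim F p_infty 1.

Definition virtual_value (F f : R -> R) (v : R) : R :=
  v - (1 - F v) / f v.

(* smooth regular: phi non-decreasing and continuous (on the value domain
   R_{>=0}) and Pr[phi(v) <= 0] > 0.  Since phi is non-decreasing,
   {v >= 0 | phi v <= 0} is an initial interval of R_{>=0}, so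
   Pr[phi(v) <= 0] > 0 iff some c >= 0 with phi <= 0 on [0,c] has F c > 0. *)
Definition smooth_regular (F f : R -> R) : Prop :=
  let phi := virtual_value F f in
  (forall v w, 0 <= v -> v <= w -> phi v <= phi w) /\
  (forall v, 0 <= v ->
     filterlim phi (within (fun y => 0 <= y) (locally v)) (locally (phi v))) /\
  (exists c, 0 <= c /\ (forall v, 0 <= v <= c -> phi v <= 0) /\ 0 < F c).

Definition unbounded_virtual_value (F f : R -> R) : Prop :=
  forall M, exists v, 0 <= v /\ M < virtual_value F f v.

(* phi^{-1}(y) = sup { v >= 0 | phi v < y }  (0 if that set is empty) *)
Definition phi_inv (phi : R -> R) (y : R) : R :=
  real (Lub_Rbar (fun v => 0 <= v /\ phi v < y)).

(* x t is the allocation rule of position t, t = 1, 2, ... (x 0 is unused) *)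
Definition is_GPA (phi : R -> R) (x : nat -> R -> R) : Prop :=
  forall t, (1 <= t)%nat ->
    (forall v, 0 <= v -> 0 <= x t v <= 1) /\
    (forall v w, 0 <= v -> v <= w -> x t v <= x t w) /\
    (forall v, 0 <= v -> x (S t) v <= x t v) /\
    (forall v, 0 <= v -> phi v < 0 -> x t v = 0).

(* For a list l of bids sorted in non-increasing order, the bid of position
   t = k+1 is nth k l r, and nth n l r = r = phi^{-1}(0) = v^(n+1). *)

(* payment of the user at (0-based) index k, i.e. position k+1 *)
Definition gpa_payment (x : nat -> R -> R) (r : R) (l : list R) (k : nat) : R :=
  nth k l r * x (S k) (nth k l r)
  - sumR (fun j => RInt (x (S j)) (nth (S j) l r) (nth j l r))
         k (length l - k).

Definition gpa_burn (phi : R -> R) (x : nat -> R -> R) (r : R) (l : list R) : R :=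
  sumR (fun k => phi (nth k l r) * x (S k) (nth k l r)
                 - RS_int (x (S k)) phi r (nth k l r))
       0 (length l).

(* A block built by the miner: an ordered list of bids, each flagged as
   coming from a real user (true) or fabricated (false).  The miner's
   revenue is the real users' payments minus the total burn. *)
Definition miner_revenue (phi : R -> R) (x : nat -> R -> R)
    (blk : list (R * bool)) : R :=
  let r := phi_inv phi 0 in
  let l := map fst blk in
  sumR (fun k => if snd (nth k blk (0, false)) then gpa_payment x r l k else 0)
       0 (length blk)
  - gpa_burn phi x r l.

(* blk is a feasible block for true bids b: sorted non-increasingly, the
   real entries form a sub-multiset of b (censoring), and the fabricated
   entries are arbitrary non-negative bids. Ties may be ordered arbitrarily. *)
Definition feasible_block (b : list R) (blk : list (R * bool)) : Prop :=
  Sorted Rge (map fst blk) /\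
  (exists rest, Permutation b (map fst (filter snd blk) ++ rest)) /\
  (forall e, In e blk -> snd e = false -> 0 <= fst e).

Definition honest_block (b : list R) (blk : list (R * bool)) : Prop :=
  Sorted Rge (map fst blk) /\
  Permutation b (map fst blk) /\
  (forall e, In e blk -> snd e = true).

Definition on_chain_miner_simple (phi : R -> R) (x : nat -> R -> R) : Prop :=
  forall (b : list R), (forall v, In v b -> 0 <= v) ->
  forall blk hon, feasible_block b blk -> honest_block b hon ->
    miner_revenue phi x blk <= miner_revenue phi x hon.

(* Main.v *)
Require Import Defs.
From Stdlib Require Import Reals Lra Lia List ZArith ClassicalEpsilon Sorted Permutation RelationClasses.
From Coquelicot Require Import Coquelicot.
Open Scope R_scope.

Lemma RI_stepfun (a b : R) (s : StepFun a b) : Riemann_integrable s a b.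
Proof.
  intro eps. exists s. exists (mkStepFun (StepFun_P4 a b 0)). split.
  - intros t _. simpl. unfold fct_cte. rewrite Rminus_diag, Rabs_R0. lra.
  - rewrite StepFun_P18, Rmult_0_l, Rabs_R0. apply cond_pos.
Qed.

Lemma RI_unif (f : R -> R) (a b : R) : a <= b ->
  (forall eps : posreal, { g : R -> R &
     (Riemann_integrable g a b * (forall t, a <= t <= b -> Rabs (f t - g t) <= eps))%type }) ->
  Riemann_integrable f a b.
Proof.
  intros Hab H eps.
  assert (He2 : 0 < eps / 2) by (generalize (cond_pos eps); lra).
  assert (He3 : 0 < eps / (2 * (b - a + 1))).
  { apply Rdiv_lt_0_compat. apply cond_pos. lra. }
  destruct (H (mkposreal _ He3)) as [g [Hg Hfg]].
  destruct (Hg (mkposreal _ He2)) as [phi [psi [H1 H2]]].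
  exists phi. exists (mkStepFun (StepFun_P28 1 psi (mkStepFun (StepFun_P4 a b (eps / (2 * (b - a + 1))))))).
  split.
  - intros t Ht. simpl. unfold fct_cte.
    assert (Ht' : a <= t <= b).
    { rewrite Rmin_left, Rmax_right in Ht by lra. exact Ht. }
    specialize (H1 t Ht). specialize (Hfg t Ht'). simpl in Hfg.
    replace (f t - phi t) with ((f t - g t) + (g t - phi t)) by ring.
    eapply Rle_trans. apply Rabs_triang. lra.
  - rewrite StepFun_P30, StepFun_P18. simpl in H2.
    eapply Rle_lt_trans. apply Rabs_triang.
    rewrite Rmult_1_l.
    assert (Habs : Rabs (eps / (2 * (b - a + 1)) * (b - a)) <= eps / 2).
    { rewrite Rabs_pos_eq.
      2:{ apply Rmult_le_pos. lra. lra. }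
      unfold Rdiv. rewrite Rinv_mult.
      replace (eps * (/ 2 * / (b - a + 1)) * (b - a)) with ((eps / 2) * ((b - a) / (b - a + 1))) by (field; lra).
      assert ((b - a) / (b - a + 1) <= 1).
      { apply Rmult_le_reg_r with (b - a + 1). lra. unfold Rdiv. rewrite Rmult_assoc, Rinv_l by lra. lra. }
      generalize (cond_pos eps); nra. }
    lra.
Qed.

Definition ind (c : R) (f : R -> R) (t : R) : R := if Rle_dec c (f t) then 1 else 0.

Lemma lub_point (E : R -> Prop) (a b : R) : E a -> (forall t, E t -> t <= b) ->
  { tau : R | a <= tau <= b /\ (forall t, E t -> t <= tau) /\
             (forall t, t < tau -> exists t', E t' /\ t < t') }.
Proof.
  intros Ha Hb.
  destruct (completeness E) as [m [Hm1 Hm2]].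
  - exists b. intros t Ht. apply Hb, Ht.
  - exists a; exact Ha.
  - exists m. split; [split|split].
    + apply Hm1, Ha.
    + apply Hm2. intros t Ht. apply Hb, Ht.
    + exact Hm1.
    + intros t Ht. apply Classical_Prop.NNPP. intro Hn.
      assert (m <= t). { apply Hm2. intros t' Ht'. apply Rnot_lt_le. intro Hc. apply Hn. exists t'. auto. }
      lra.
Qed.

Lemma ind_stepfun (f : R -> R) (a b c : R) : a <= b ->
  (forall x y, a <= x -> x <= y -> y <= b -> f x <= f y) ->
  IsStepFun (ind c f) a b.
Proof.
  intros Hab Hf.
  destruct (lub_point (fun t => a <= t <= b /\ (t = a \/ f t < c)) a b) as [tau [Htau [Hub Hlt]]].
  - split; [lra | now left].
  - intros t [Ht _]; lra.
  - exists (a :: tau :: b :: nil). exists (0 :: 1 :: nil).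
    unfold adapted_couple. rewrite Rmin_left, Rmax_right by lra.
    split; [|split; [reflexivity|split; [reflexivity|split; [reflexivity|]]]].
    + intros i Hi. simpl in Hi. destruct i as [|[|i]]; simpl; lra || lia.
    + intros i Hi. simpl in Hi. unfold constant_D_eq, open_interval.
      destruct i as [|[|i]]; simpl; try lia.
      * intros x Hx. unfold ind. destruct (Rle_dec c (f x)) as [Hc|Hc]; [|reflexivity].
        exfalso. destruct (Hlt x (proj2 Hx)) as [t' [[Ht'1 [Ht'2|Ht'2]] Ht'3]]; [lra|].
        assert (f x <= f t') by (apply Hf; lra). lra.
      * intros x Hx. unfold ind. destruct (Rle_dec c (f x)) as [Hc|Hc]; [reflexivity|].
        exfalso. assert (x <= tau). { apply Hub. split. lra. right. lra. } lra.
Qed.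

Fixpoint gsum (f : R -> R) (c0 h : R) (m : nat) (t : R) : R :=
  match m with
  | O => 0
  | S m' => gsum f c0 h m' t + h * ind (c0 + INR (S m') * h) f t
  end.

Lemma gsum_RI (f : R -> R) (a b c0 h : R) (m : nat) : a <= b ->
  (forall x y, a <= x -> x <= y -> y <= b -> f x <= f y) ->
  Riemann_integrable (fun t => c0 + gsum f c0 h m t) a b.
Proof.
  intros Hab Hf. induction m as [|m IH].
  - cbn [gsum]. apply Riemann_integrable_ext with (fct_cte c0).
    + intros; unfold fct_cte; ring.
    + apply RiemannInt_P14.
  - cbn [gsum]. apply Riemann_integrable_ext with (fun t => (c0 + gsum f c0 h m t) + h * ind (c0 + INR (S m) * h) f t).
    + intros. ring.
    + apply RiemannInt_P10. exact IH.
      apply RI_stepfun with (s := mkStepFun (ind_stepfun f a b _ Hab Hf)).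
Qed.

Lemma gsum_approx (f : R -> R) (c0 h : R) (t : R) : 0 < h -> c0 <= f t ->
  forall m, exists k : nat, (k <= m)%nat /\ gsum f c0 h m t = INR k * h /\ INR k * h <= f t - c0 /\
     (k = m \/ f t - c0 < (INR k + 1) * h).
Proof.
  intros Hh Hc m. induction m as [|m IH].
  - exists 0%nat. cbn [gsum INR]. split; [lia|split; [ring|split; [lra|now left]]].
  - destruct IH as [k [Hk1 [Hk2 [Hk3 Hk4]]]]. cbn [gsum]. rewrite Hk2. unfold ind.
    destruct (Rle_dec (c0 + INR (S m) * h) (f t)) as [Hle|Hnle].
    + assert (k = m).
      { destruct Hk4 as [Hk4|Hk4]; auto. exfalso.
        assert (INR k <= INR m) by (apply le_INR; lia).
        assert ((INR k + 1) * h <= (INR m + 1) * h) by (apply Rmult_le_compat_r; lra).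
        rewrite S_INR in Hle. lra. }
      subst k. exists (S m). rewrite S_INR in *. split; [lia|split; [ring|split; [lra|now left]]].
    + exists k. split; [lia|split; [ring|split; [lra|]]].
      right. destruct Hk4 as [Hk4|Hk4]; auto. subst k. rewrite S_INR in Hnle. lra.
Qed.

Lemma RI_mono (f : R -> R) (a b : R) : a <= b ->
  (forall x y, a <= x -> x <= y -> y <= b -> f x <= f y) ->
  Riemann_integrable f a b.
Proof.
  intros Hab Hf. apply RI_unif; auto. intro eps.
  set (D := f b - f a).
  assert (HD : 0 <= D) by (unfold D; assert (f a <= f b) by (apply Hf; lra); lra).
  set (n := Z.to_nat (up (D / eps))).
  assert (Hn : INR n > D / eps).
  { destruct (archimed (D / eps)) as [Ha _]. unfold n.
    assert (0 <= D / eps) by (apply Rdiv_le_0_compat; [lra| apply cond_pos]).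
    destruct (Z_lt_le_dec (up (D/eps)) 0) as [Hz|Hz].
    - assert (IZR (up (D/eps)) < 0) by (apply IZR_lt; lia). lra.
    - rewrite INR_IZR_INZ, Z2Nat.id by lia. lra. }
  assert (HnD : D <= INR n * eps).
  { generalize (cond_pos eps); intro He.
    apply Rmult_lt_compat_r with (r := eps) in Hn; auto.
    unfold Rdiv in Hn. rewrite Rmult_assoc, Rinv_l in Hn by lra. lra. }
  exists (fun t => f a + gsum f (f a) eps n t).
  split.
  - apply gsum_RI; auto.
  - intros t Ht. assert (Hft : f a <= f t) by (apply Hf; lra).
    assert (Hfb : f t <= f b) by (apply Hf; lra).
    destruct (gsum_approx f (f a) eps t (cond_pos eps) Hft n) as [k [Hk1 [Hk2 [Hk3 Hk4]]]].
    rewrite Hk2. rewrite Rabs_pos_eq by lra.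
    destruct Hk4 as [Hk4|Hk4].
    + subst k. unfold D in HnD. generalize (cond_pos eps); lra.
    + lra.
Qed.

Lemma ex_RInt_mono (f : R -> R) (a b : R) : a <= b ->
  (forall x y, a <= x -> x <= y -> y <= b -> f x <= f y) ->
  ex_RInt f a b.
Proof. intros; apply ex_RInt_Reals_1, RI_mono; auto. Qed.

Lemma lub_fin (E : R -> Prop) (y0 M : R) : E y0 -> (forall y, E y -> y <= M) ->
  Lub_Rbar E = Finite (real (Lub_Rbar E)) /\
  (forall y, E y -> y <= real (Lub_Rbar E)) /\
  (forall B, (forall y, E y -> y <= B) -> real (Lub_Rbar E) <= B).
Proof.
  intros H0 HM. destruct (Lub_Rbar_correct E) as [Hub Hl].
  assert (H1 : Rbar_le (Lub_Rbar E) M) by (apply Hl; intros y Hy; apply HM, Hy).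
  assert (H2 : Rbar_le y0 (Lub_Rbar E)) by (apply Hub, H0).
  destruct (Lub_Rbar E) as [l| |] eqn:HL; simpl in H1, H2; try contradiction.
  split; [reflexivity|split].
  - intros y Hy. specialize (Hub y Hy). simpl. exact Hub.
  - intros B HB. assert (Rbar_le (Finite l) B) by (apply Hl; intros y Hy; apply HB, Hy).
    exact H.
Qed.

Definition GE (g phi : R -> R) (s : R) : R -> Prop :=
  fun y => exists z, 0 <= z /\ (z = 0 \/ phi z < s) /\ y = g z.

Definition Gs (g phi : R -> R) (s : R) : R := real (Lub_Rbar (GE g phi s)).

Lemma Gs_ge (g phi : R -> R) (M s z : R) : (forall z, 0 <= z -> g z <= M) ->
  0 <= z -> (z = 0 \/ phi z < s) -> g z <= Gs g phi s.
Proof.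
  intros HM Hz Hs. unfold Gs.
  destruct (lub_fin (GE g phi s) (g z) M) as [_ [H _]].
  - exists z; auto.
  - intros y [z' [Hz' [_ ->]]]. apply HM, Hz'.
  - apply H. exists z; auto.
Qed.

Lemma Gs_le (g phi : R -> R) (M s B : R) : (forall z, 0 <= z -> g z <= M) ->
  (forall z, 0 <= z -> (z = 0 \/ phi z < s) -> g z <= B) -> Gs g phi s <= B.
Proof.
  intros HM HB. unfold Gs.
  destruct (lub_fin (GE g phi s) (g 0) M) as [_ [_ H]].
  - exists 0; split; [lra|split; [now left|reflexivity]].
  - intros y [z' [Hz' [_ ->]]]. apply HM, Hz'.
  - apply H. intros y [z [Hz [Hs ->]]]. apply HB; auto.
Qed.

Lemma Gs_mono (g phi : R -> R) (M s s' : R) : (forall z, 0 <= z -> g z <= M) ->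
  s <= s' -> Gs g phi s <= Gs g phi s'.
Proof.
  intros HM Hss. apply Gs_le with M; auto.
  intros z Hz Hs. apply Gs_ge with M; auto. destruct Hs; [left|right]; lra.
Qed.

Lemma Gs_le_fun (g h phi : R -> R) (M s : R) : (forall z, 0 <= z -> g z <= M) ->
  (forall z, 0 <= z -> h z <= M) -> (forall z, 0 <= z -> g z <= h z) ->
  Gs g phi s <= Gs h phi s.
Proof.
  intros Hg Hh Hgh. apply Gs_le with M; auto.
  intros z Hz Hs. apply Rle_trans with (h z); auto. apply Gs_ge with M; auto.
Qed.

Lemma Chasles (f : R -> R) (a b c : R) : ex_RInt f a b -> ex_RInt f b c ->
  RInt f a b + RInt f b c = RInt f a c.
Proof. intros H1 H2. rewrite <- (RInt_Chasles f a b c H1 H2). reflexivity. Qed.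

Lemma RInt_cst (a b c : R) : RInt (fun _ => c) a b = (b - a) * c.
Proof. rewrite RInt_const. reflexivity. Qed.

Lemma RInt_swap' (f : R -> R) (a b : R) : ex_RInt f a b -> RInt f b a = - RInt f a b.
Proof. intro H. rewrite <- (opp_RInt_swap f a b H). reflexivity. Qed.

Lemma RInt_bounds (f : R -> R) (a b lo hi : R) : a <= b -> ex_RInt f a b ->
  (forall x, a < x < b -> lo <= f x <= hi) ->
  (b - a) * lo <= RInt f a b <= (b - a) * hi.
Proof.
  intros Hab Hf H. rewrite <- !RInt_cst. split; apply RInt_le; auto;
    try apply ex_RInt_const; intros x Hx; apply H; auto.
Qed.

Lemma fold_app (l1 l2 : list R) : fold_right Rplus 0 (l1 ++ l2) = fold_right Rplus 0 l1 + fold_right Rplus 0 l2.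
Proof. induction l1; simpl; [ring|rewrite IHl1; ring]. Qed.

Lemma sumR_0 f a : sumR f a 0 = 0.
Proof. reflexivity. Qed.

Lemma sumR_S f a n : sumR f a (S n) = sumR f a n + f (a + n)%nat.
Proof. unfold sumR. rewrite seq_S, map_app, fold_app. simpl. ring. Qed.

Lemma sumR_Sl f a n : sumR f a (S n) = f a + sumR f (S a) n.
Proof. reflexivity. Qed.

Lemma sumR_ext f g a n : (forall i, (a <= i < a + n)%nat -> f i = g i) -> sumR f a n = sumR g a n.
Proof.
  revert a. induction n; intros a H; [reflexivity|].
  rewrite !sumR_Sl. rewrite H by lia. rewrite IHn; auto. intros; apply H; lia.
Qed.

Lemma sumR_plus f g a n : sumR (fun i => f i + g i) a n = sumR f a n + sumR g a n.
Proof. revert a; induction n; intros a; [simpl; unfold sumR; simpl; ring|rewrite !sumR_Sl, IHn; ring]. Qed.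

Lemma sumR_scal c f a n : sumR (fun i => c * f i) a n = c * sumR f a n.
Proof. revert a; induction n; intros a; [unfold sumR; simpl; ring|rewrite !sumR_Sl, IHn; ring]. Qed.

Lemma sumR_opp f a n : sumR (fun i => - f i) a n = - sumR f a n.
Proof. revert a; induction n; intros a; [unfold sumR; simpl; ring|rewrite !sumR_Sl, IHn; ring]. Qed.

Definition cont0 (phi : R -> R) : Prop :=
  forall v, 0 <= v -> filterlim phi (within (fun y => 0 <= y) (locally v)) (locally (phi v)).

Lemma cont0_pt (phi : R -> R) (v : R) : cont0 phi -> 0 <= v ->
  continuity_pt (fun t => phi (Rmax 0 t)) v.
Proof.
  intros Hc Hv. apply continuity_pt_filterlim.
  rewrite Rmax_right by lra.
  apply filterlim_locally. intro eps.
  specialize (Hc v Hv). apply filterlim_locally with (eps := eps) in Hc.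
  destruct Hc as [d Hd]. exists d. intros y Hy.
  apply Hd. 2: apply Rmax_l.
  unfold ball in *; simpl in *. unfold AbsRing_ball in *. unfold abs, minus, plus, opp in *; simpl in *.
  unfold Rmax. destruct (Rle_dec 0 y); auto.
  apply Rle_lt_trans with (Rabs (y + - v)); auto.
  rewrite !Rabs_left1 by lra. lra.
Qed.

Lemma phi_UC (phi : R -> R) (a b : R) : cont0 phi -> 0 <= a ->
  forall eta, 0 < eta -> exists delta, 0 < delta /\
    forall x y, a <= x <= b -> a <= y <= b -> Rabs (x - y) < delta -> Rabs (phi x - phi y) < eta.
Proof.
  intros Hc Ha eta Heta.
  assert (H : forall x, a <= x <= b -> continuity_pt (fun t => phi (Rmax 0 t)) x).
  { intros x Hx. apply cont0_pt; auto. lra. }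
  destruct (Heine_cor2 H (mkposreal _ Heta)) as [d Hd].
  exists d. split; [apply cond_pos|]. intros x y Hx Hy Hxy.
  specialize (Hd x y Hx Hy Hxy). simpl in Hd.
  rewrite !Rmax_right in Hd by lra. exact Hd.
Qed.

Definition RSH (phi g : R -> R) (M : R) : Prop :=
  (forall v w, 0 <= v -> v <= w -> phi v <= phi w) /\ cont0 phi /\
  (forall v w, 0 <= v -> v <= w -> g v <= g w) /\ (forall z, 0 <= z -> g z <= M).

Lemma Gs_exRInt phi g M a b : RSH phi g M -> ex_RInt (Gs g phi) a b.
Proof.
  intros [_ [_ [_ HM]]].
  destruct (Rle_dec a b).
  - apply ex_RInt_mono; auto. intros; apply Gs_mono with M; auto.
  - apply ex_RInt_swap. apply ex_RInt_mono; [lra|]. intros; apply Gs_mono with M; auto.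
Qed.

Lemma part_mono a b m p xi : tagged_partition a b m p xi ->
  forall i j, (i <= j <= m)%nat -> p i <= p j.
Proof.
  intros [_ [_ H]] i j Hij. induction j as [|j IH].
  - assert (i = 0%nat) by lia. subst; lra.
  - destruct (Nat.eq_dec i (S j)) as [->|Hne]; [lra|].
    apply Rle_trans with (p j). apply IH; lia. specialize (H j ltac:(lia)). lra.
Qed.

Lemma piece_bound phi g M (alpha beta ga gb gx : R) (u w : R) : RSH phi g M ->
  0 <= u <= w -> alpha = phi u -> beta = phi w -> ga = g u -> gb = g w ->
  ga <= gx <= gb ->
  Rabs (gx * (beta - alpha) - RInt (Gs g phi) alpha beta) <= (gb - ga) * (beta - alpha).
Proof.
  intros HR Huw -> -> -> -> Hgx. pose proof HR as [Hpm [_ [Hgm HM]]].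
  assert (Hab : phi u <= phi w) by (apply Hpm; lra).
  destruct (RInt_bounds (Gs g phi) (phi u) (phi w) (g u) (g w) Hab (Gs_exRInt _ _ _ _ _ HR)).
  - intros s Hs. split.
    + apply Gs_ge with M; auto; lra.
    + apply Gs_le with M; auto. intros z Hz [->|Hzs].
      * apply Hgm; lra.
      * apply Hgm; auto. destruct (Rle_dec z w); auto.
        assert (phi w <= phi z) by (apply Hpm; lra). lra.
  - apply Rabs_le. nra.
Qed.

Lemma RS_core phi g M a b m p xi eta : RSH phi g M -> 0 <= a -> tagged_partition a b m p xi ->
  (forall i, (i < m)%nat -> phi (p (S i)) - phi (p i) <= eta) ->
  forall k, (k <= m)%nat ->
  Rabs (sumR (fun i => g (xi i) * (phi (p (S i)) - phi (p i))) 0 k - RInt (Gs g phi) (phi (p 0%nat)) (phi (p k)))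
   <= eta * (g (p k) - g (p 0%nat)).
Proof.
  intros HR Ha Hp Heta. pose proof HR as [Hpm [_ [Hgm HM]]].
  pose proof (part_mono _ _ _ _ _ Hp) as Hmono.
  destruct Hp as [Hp0 [Hpm' Hpx]].
  induction k as [|k IH]; intros Hk.
  - rewrite sumR_0, RInt_point. unfold zero; simpl. rewrite Rminus_0_r, Rabs_R0. lra.
  - rewrite sumR_S. simpl (0 + k)%nat.
    rewrite <- (Chasles _ (phi (p 0%nat)) (phi (p k)) (phi (p (S k)))) by (eapply Gs_exRInt; eauto).
    assert (Hpk : a <= p k) by (rewrite <- Hp0; apply Hmono; lia).
    assert (Hpk1 : p k <= p (S k)) by (apply Hmono; lia).
    specialize (Hpx k ltac:(lia)).
    assert (Hb := piece_bound phi g M (phi (p k)) (phi (p (S k))) (g (p k)) (g (p (S k))) (g (xi k)) (p k) (p (S k)) HR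
      ltac:(lra) eq_refl eq_refl eq_refl eq_refl ltac:(split; apply Hgm; lra)).
    specialize (IH ltac:(lia)). specialize (Heta k ltac:(lia)).
    assert (Hphi : 0 <= phi (p (S k)) - phi (p k)) by (assert (phi (p k) <= phi (p (S k))) by (apply Hpm; lra); lra).
    assert (Hg : 0 <= g (p (S k)) - g (p k)) by (assert (g (p k) <= g (p (S k))) by (apply Hgm; lra); lra).
    assert (Hx : (g (p (S k)) - g (p k)) * (phi (p (S k)) - phi (p k)) <= eta * (g (p (S k)) - g (p k))) by nra.
    match goal with |- Rabs ?e <= _ => replace e with
      ((sumR (fun i => g (xi i) * (phi (p (S i)) - phi (p i))) 0 k - RInt (Gs g phi) (phi (p 0%nat)) (phi (p k)))
       + (g (xi k) * (phi (p (S k)) - phi (p k)) - RInt (Gs g phi) (phi (p k)) (phi (p (S k))))) by ring end.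
    eapply Rle_trans. apply Rabs_triang. lra.
Qed.

Lemma RS_exists phi g M a b : RSH phi g M -> 0 <= a <= b ->
  is_RS_integral g phi a b (RInt (Gs g phi) (phi a) (phi b)).
Proof.
  intros HR Hab eps Heps. pose proof HR as [Hpm [Hc [Hgm HM]]].
  assert (Hgab : g a <= g b) by (apply Hgm; lra).
  set (eta := eps / (g b - g a + 1)).
  assert (Heta : 0 < eta) by (unfold eta; apply Rdiv_lt_0_compat; lra).
  destruct (phi_UC phi a b Hc (proj1 Hab) eta Heta) as [d [Hd HUC]].
  exists d. split; auto. intros m p xi Hp Hmesh.
  pose proof (part_mono _ _ _ _ _ Hp) as Hmono.
  pose proof Hp as [Hp0 [Hpm' _]].
  assert (Hin : forall i, (i <= m)%nat -> a <= p i <= b).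
  { intros i Hi. rewrite <- Hp0, <- Hpm'. split; apply Hmono; lia. }
  assert (H := RS_core phi g M a b m p xi eta HR (proj1 Hab) Hp).
  unfold RS_sum.
  assert (Hst : forall i, (i < m)%nat -> phi (p (S i)) - phi (p i) <= eta).
  { intros i Hi. assert (Hi1 := Hin i ltac:(lia)). assert (Hi2 := Hin (S i) ltac:(lia)).
    assert (Habs := HUC (p (S i)) (p i) Hi2 Hi1).
    assert (p i <= p (S i)) by (apply Hmono; lia).
    specialize (Hmesh i Hi). rewrite Rabs_pos_eq in Habs by lra.
    assert (Hh := Habs Hmesh). apply Rabs_lt_between in Hh. lra. }
  specialize (H Hst m (Nat.le_refl m)). rewrite Hp0 in H. rewrite Hpm' in H.
  eapply Rle_lt_trans. apply H.
  { unfold eta. 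
    assert (eps / (g b - g a + 1) * (g b - g a) < eps); [|lra].
    apply Rmult_lt_reg_r with (g b - g a + 1). lra.
    replace (eps / (g b - g a + 1) * (g b - g a) * (g b - g a + 1)) with (eps * (g b - g a)) by (field; lra).
    nra. }
Qed.

Lemma nat_above (x : R) : exists m : nat, x < INR m /\ (0 < m)%nat.
Proof.
  destruct (INR_unbounded (Rmax x 0)) as [n Hn]. exists (S n). split.
  - rewrite S_INR. generalize (Rmax_l x 0). lra.
  - lia.
Qed.

Lemma RS_unique g phi a b I J : a <= b -> is_RS_integral g phi a b I -> is_RS_integral g phi a b J -> I = J.
Proof.
  intros Hab HI HJ.
  apply Rminus_diag_uniq. apply Rabs_eq_0. apply Rle_antisym; [|apply Rabs_pos].
  apply Rnot_lt_le. intro Hpos.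
  set (e := Rabs (I - J) / 2).
  assert (He : 0 < e) by (unfold e; lra).
  destruct (HI e He) as [d1 [Hd1 H1]]. destruct (HJ e He) as [d2 [Hd2 H2]].
  set (d := Rmin d1 d2).
  assert (Hd : 0 < d) by (unfold d; apply Rmin_glb_lt; auto).
  destruct (nat_above ((b - a) / d)) as [m [Hm Hm0]].
  assert (HmR : 0 < INR m) by (apply lt_0_INR; lia).
  set (h := (b - a) / INR m).
  assert (Hh : 0 <= h) by (unfold h; apply Rdiv_le_0_compat; lra).
  assert (Hhd : h < d).
  { unfold h. apply Rmult_lt_reg_r with (INR m); auto.
    unfold Rdiv. rewrite Rmult_assoc, Rinv_l by lra.
    apply Rmult_lt_compat_r with (r := d) in Hm; auto. unfold Rdiv in Hm.
    rewrite Rmult_assoc, Rinv_l in Hm by lra. lra. }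
  set (p := fun i : nat => a + INR i * h).
  assert (Hp : tagged_partition a b m p p).
  { split; [|split].
    - unfold p. simpl. ring.
    - unfold p, h. field. lra.
    - intros i Hi. unfold p. rewrite S_INR. split; nra. }
  assert (Hmesh : forall d', h < d' -> mesh_lt m p d').
  { intros d' Hd' i Hi. unfold p. rewrite S_INR. lra. }
  specialize (H1 m p p Hp (Hmesh d1 (Rlt_le_trans _ _ _ Hhd (Rmin_l _ _)))).
  specialize (H2 m p p Hp (Hmesh d2 (Rlt_le_trans _ _ _ Hhd (Rmin_r _ _)))).
  assert (Rabs (I - J) <= Rabs (RS_sum g phi m p p - J) + Rabs (RS_sum g phi m p p - I)).
  { replace (I - J) with ((RS_sum g phi m p p - J) - (RS_sum g phi m p p - I)) by ring.
    eapply Rle_trans. apply Rabs_triang. rewrite Rabs_Ropp. lra. }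
  unfold e in *. lra.
Qed.

Lemma RS_int_ord_eq g phi a b I : a <= b -> is_RS_integral g phi a b I -> RS_int_ord g phi a b = I.
Proof.
  intros Hab HI. unfold RS_int_ord.
  destruct (excluded_middle_informative _) as [H|H].
  - destruct (constructive_indefinite_description _ H) as [J HJ]. simpl.
    eapply RS_unique; eauto.
  - exfalso. apply H. exists I; auto.
Qed.

Lemma RS_int_eq phi g M a b : RSH phi g M -> 0 <= a -> 0 <= b ->
  RS_int g phi a b = RInt (Gs g phi) (phi a) (phi b).
Proof.
  intros HR Ha Hb. unfold RS_int. destruct (Rle_dec a b) as [Hab|Hab].
  - apply RS_int_ord_eq; auto. apply RS_exists with M; auto.
  - rewrite (RS_int_ord_eq g phi b a (RInt (Gs g phi) (phi b) (phi a))).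
    + rewrite RInt_swap'. ring. eapply Gs_exRInt; eauto.
    + lra.
    + apply RS_exists with M; auto. lra.
Qed.

Definition Setting (phi : R -> R) (x : nat -> R -> R) (r : R) : Prop :=
  0 <= r /\ (forall v w, 0 <= v -> v <= w -> phi v <= phi w) /\ cont0 phi /\
  (forall v, 0 <= v -> phi v <= v) /\ (forall v, 0 <= v -> v < r -> phi v < 0) /\
  (forall v, r <= v -> 0 <= phi v) /\ is_GPA phi x /\
  (forall t w, (1 <= t)%nat -> 0 <= w ->
     INR t * (x t w - x (S t) w) >= INR (S t) * (x (S t) w - x (S (S t)) w)) /\
  (forall t w, (1 <= t)%nat -> r <= w ->
     INR t * RInt (fun z => x t z - x (S t) z) r w
     <= phi w * x (S t) w - RS_int (x (S t)) phi r w).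

Definition U (x : nat -> R -> R) (r : R) (t : nat) (v : R) : R := RInt (x t) r v.
Definition Bn (phi : R -> R) (x : nat -> R -> R) (r : R) (t : nat) (v : R) : R :=
  phi v * x t v - RS_int (x t) phi r v.
Definition Dd (x : nat -> R -> R) (r : R) (t : nat) (v : R) : R := U x r t v - U x r (S t) v.
Definition Kk (phi : R -> R) (x : nat -> R -> R) (r : R) (t : nat) (v : R) : R :=
  v * x t v - U x r t v - Bn phi x r t v.


Lemma S_r phi x r : Setting phi x r -> 0 <= r.
Proof. intros H; apply H. Qed.

Lemma S_x phi x r t : Setting phi x r -> (1 <= t)%nat ->
  (forall v, 0 <= v -> 0 <= x t v <= 1) /\
  (forall v w, 0 <= v -> v <= w -> x t v <= x t w) /\
  (forall v, 0 <= v -> x (S t) v <= x t v) /\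
  (forall v, 0 <= v -> v < r -> x t v = 0).
Proof.
  intros [Hr [_ [_ [_ [Hneg [_ [HG _]]]]]]] Ht.
  destruct (HG t Ht) as [H1 [H2 [H3 H4]]]. split; [|split; [|split]]; auto.
Qed.

Lemma S_RSH phi x r t : Setting phi x r -> (1 <= t)%nat -> RSH phi (x t) 1.
Proof.
  intros HS Ht. destruct (S_x _ _ _ t HS Ht) as [H1 [H2 _]].
  destruct HS as [_ [Hm [Hc _]]].
  split; [|split; [|split]]; auto. intros z Hz; apply H1, Hz.
Qed.

Lemma S_exU phi x r t a b : Setting phi x r -> (1 <= t)%nat -> 0 <= a -> 0 <= b -> ex_RInt (x t) a b.
Proof.
  intros HS Ht Ha Hb. destruct (S_x _ _ _ t HS Ht) as [_ [H2 _]].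
  destruct (Rle_dec a b).
  - apply ex_RInt_mono; auto. intros; apply H2; lra.
  - apply ex_RInt_swap, ex_RInt_mono; [lra|]. intros; apply H2; lra.
Qed.

Lemma S_U0 phi x r t v : Setting phi x r -> (1 <= t)%nat -> 0 <= v <= r -> U x r t v = 0.
Proof.
  intros HS Ht Hv. destruct (S_x _ _ _ t HS Ht) as [_ [_ [_ H4]]].
  unfold U. rewrite (RInt_ext _ (fun _ => 0)).
  - rewrite RInt_cst. ring.
  - intros z Hz. rewrite Rmin_right, Rmax_left in Hz by lra. apply H4; lra.
Qed.

Lemma S_B0 phi x r t v : Setting phi x r -> (1 <= t)%nat -> 0 <= v < r -> Bn phi x r t v = 0.
Proof.
  intros HS Ht Hv. pose proof (S_x _ _ _ t HS Ht) as [H1 [_ [_ H4]]].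
  pose proof HS as [Hr [Hm [_ [_ [Hneg _]]]]].
  unfold Bn. rewrite (RS_int_eq phi (x t) 1 r v (S_RSH _ _ _ t HS Ht) Hr (proj1 Hv)).
  rewrite H4 by lra.
  rewrite (RInt_ext _ (fun _ => 0)).
  - rewrite RInt_cst. ring.
  - intros s Hs. assert (phi v <= phi r) by (apply Hm; lra).
    rewrite Rmin_right, Rmax_left in Hs by lra.
    apply Rle_antisym.
    + apply Gs_le with 1. intros; apply H1; auto.
      intros z Hz [->|Hzs].
      * rewrite H4; lra.
      * destruct (Rlt_dec z r). rewrite H4; lra.
        assert (phi r <= phi z) by (apply Hm; lra). lra.
    + rewrite <- (H4 0) at 1 by lra. apply Gs_ge with 1.
      * intros; apply H1; auto.
      * lra.
      * now left.
Qed.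

Lemma S_Dint phi x r t v : Setting phi x r -> (1 <= t)%nat -> 0 <= v ->
  Dd x r t v = RInt (fun z => x t z - x (S t) z) r v.
Proof.
  intros HS Ht Hv. unfold Dd, U.
  pose proof (S_r _ _ _ HS).
  symmetry. exact (RInt_minus (x t) (x (S t)) r v (S_exU phi x r t r v HS Ht H Hv) (S_exU phi x r (S t) r v HS ltac:(lia) H Hv)).
Qed.

Lemma S_D_mono phi x r t v w : Setting phi x r -> (1 <= t)%nat -> 0 <= v -> v <= w ->
  Dd x r t v <= Dd x r t w.
Proof.
  intros HS Ht Hv Hvw. pose proof (S_r _ _ _ HS) as Hr.
  destruct (S_x _ _ _ t HS Ht) as [_ [_ [H3 _]]].
  assert (Hex : forall a b, 0 <= a -> 0 <= b -> ex_RInt (fun z => x t z - x (S t) z) a b).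
  { intros a b Ha Hb. apply (ex_RInt_minus (V := R_NormedModule)); apply (S_exU phi x r); auto. }
  rewrite (S_Dint phi x r t v), (S_Dint phi x r t w) by (auto; lra).
  rewrite <- (Chasles _ r v w) by (apply Hex; lra).
  assert (0 <= RInt (fun z => x t z - x (S t) z) v w); [|lra].
  apply RInt_ge_0; [lra|apply Hex; lra|]. intros z Hz. specialize (H3 z ltac:(lra)). lra.
Qed.

Lemma S_D_nonneg phi x r t v : Setting phi x r -> (1 <= t)%nat -> 0 <= v -> 0 <= Dd x r t v.
Proof.
  intros HS Ht Hv. pose proof (S_r _ _ _ HS) as Hr.
  replace 0 with (Dd x r t 0).
  - apply (S_D_mono phi); auto; lra.
  - unfold Dd. rewrite (S_U0 phi x r t 0), (S_U0 phi x r (S t) 0); auto; lra.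
Qed.

Lemma RInt_scalR (f : R -> R) a b c : ex_RInt f a b -> RInt (fun z => c * f z) a b = c * RInt f a b.
Proof. intro H. exact (RInt_scal f a b c H). Qed.

Lemma S_D0 phi x r t v : Setting phi x r -> (1 <= t)%nat -> 0 <= v <= r -> Dd x r t v = 0.
Proof.
  intros HS Ht Hv. unfold Dd. rewrite (S_U0 phi x r t v), (S_U0 phi x r (S t) v); auto; lra.
Qed.

Lemma S_hyp1 phi x r t v : Setting phi x r -> (1 <= t)%nat -> 0 <= v ->
  INR (S t) * Dd x r (S t) v <= INR t * Dd x r t v.
Proof.
  intros HS Ht Hv. pose proof (S_r _ _ _ HS) as Hr.
  destruct (Rle_dec v r) as [Hvr|Hvr].
  - rewrite (S_D0 phi x r t v), (S_D0 phi x r (S t) v); auto; lra.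
  - rewrite (S_Dint phi x r t v), (S_Dint phi x r (S t) v); auto.
    assert (Hex : forall t', (1 <= t')%nat -> ex_RInt (fun z => x t' z - x (S t') z) r v).
    { intros t' Ht'. apply (ex_RInt_minus (V := R_NormedModule)); apply (S_exU phi x r); auto; lra. }
    rewrite <- (RInt_scalR _ r v (INR (S t)) (Hex (S t) ltac:(lia))).
    rewrite <- (RInt_scalR _ r v (INR t) (Hex t Ht)).
    apply RInt_le; [lra| | |].
    + apply (ex_RInt_scal (V := R_NormedModule)). apply Hex; lia.
    + apply (ex_RInt_scal (V := R_NormedModule)). apply Hex; lia.
    + intros z Hz. destruct HS as [_ [_ [_ [_ [_ [_ [_ [H1 _]]]]]]]].
      specialize (H1 t z Ht ltac:(lra)). lra.
Qed.

Lemma S_hyp2 phi x r t v : Setting phi x r -> (1 <= t)%nat -> 0 <= v ->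
  INR t * Dd x r t v <= Bn phi x r (S t) v.
Proof.
  intros HS Ht Hv. pose proof (S_r _ _ _ HS) as Hr.
  destruct (Rlt_dec v r) as [Hvr|Hvr].
  - rewrite (S_D0 phi x r t v), (S_B0 phi x r (S t) v); auto; lra.
  - rewrite (S_Dint phi x r t v); auto. unfold Bn.
    destruct HS as [_ [_ [_ [_ [_ [_ [_ [_ H2]]]]]]]]. apply H2; auto. lra.
Qed.

Lemma S_Bdiff phi x r t u w : Setting phi x r -> (1 <= t)%nat -> 0 <= u -> 0 <= w ->
  Bn phi x r t w - Bn phi x r t u = phi w * x t w - phi u * x t u - RInt (Gs (x t) phi) (phi u) (phi w).
Proof.
  intros HS Ht Hu Hw. pose proof (S_r _ _ _ HS) as Hr. pose proof (S_RSH _ _ _ t HS Ht) as HR.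
  unfold Bn. rewrite !(RS_int_eq phi (x t) 1 r) by auto.
  rewrite <- (Chasles _ (phi r) (phi u) (phi w)) by (eapply Gs_exRInt; eauto). ring.
Qed.

Lemma S_Gbounds phi x r t u w : Setting phi x r -> (1 <= t)%nat -> 0 <= u -> u <= w ->
  (phi w - phi u) * x t u <= RInt (Gs (x t) phi) (phi u) (phi w) <= (phi w - phi u) * x t w.
Proof.
  intros HS Ht Hu Huw. pose proof (S_RSH _ _ _ t HS Ht) as HR.
  pose proof HR as [Hpm [_ [Hgm HM]]].
  apply RInt_bounds. apply Hpm; lra. eapply Gs_exRInt; eauto.
  intros s Hs. split.
  - apply Gs_ge with 1; auto. lra.
  - apply Gs_le with 1; auto. intros z Hz [->|Hzs].
    + apply Hgm; lra.
    + apply Hgm; auto. destruct (Rle_dec z w); auto.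
      assert (phi w <= phi z) by (apply Hpm; lra). lra.
Qed.

Lemma S_F5 phi x r t v : Setting phi x r -> (1 <= t)%nat -> 0 <= v ->
  Bn phi x r t v - Bn phi x r (S t) v <= v * (x t v - x (S t) v).
Proof.
  intros HS Ht Hv. pose proof (S_r _ _ _ HS) as Hr.
  destruct (S_x _ _ _ t HS Ht) as [_ [_ [H3 H4]]].
  destruct (Rlt_dec v r) as [Hvr|Hvr].
  - rewrite (S_B0 phi x r t v), (S_B0 phi x r (S t) v); auto.
    rewrite (H4 v), (proj2 (proj2 (proj2 (S_x _ _ _ (S t) HS ltac:(lia)))) v); auto. lra.
  - pose proof HS as [_ [Hpm [_ [Hpv _]]]].
    unfold Bn. rewrite !(RS_int_eq phi _ 1 r v) by (auto; apply (S_RSH phi x r); auto).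
    assert (RInt (Gs (x (S t)) phi) (phi r) (phi v) <= RInt (Gs (x t) phi) (phi r) (phi v)).
    { apply RInt_le. apply Hpm; lra. eapply Gs_exRInt; apply (S_RSH phi x r); eauto.
      eapply Gs_exRInt; apply (S_RSH phi x r); eauto.
      intros s _. apply Gs_le_fun with 1.
      - intros z Hz; apply (S_x _ _ _ (S t) HS ltac:(lia)); auto.
      - intros z Hz; apply (S_x _ _ _ t HS Ht); auto.
      - intros z Hz; apply H3; auto. }
    specialize (H3 v Hv). specialize (Hpv v Hv). nra.
Qed.

Lemma S_Br phi x r t : Setting phi x r -> (1 <= t)%nat -> Bn phi x r t r = phi r * x t r.
Proof.
  intros HS Ht. pose proof (S_r _ _ _ HS) as Hr. unfold Bn.
  rewrite (RS_int_eq phi _ 1 r r) by (auto; apply (S_RSH phi x r); auto).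
  rewrite RInt_point. unfold zero; simpl. ring.
Qed.

Lemma S_B_mono phi x r t u w : Setting phi x r -> (1 <= t)%nat -> 0 <= u -> u <= w ->
  Bn phi x r t u <= Bn phi x r t w.
Proof.
  intros HS Ht Hu Huw. pose proof (S_r _ _ _ HS) as Hr.
  pose proof HS as [_ [Hpm [_ [_ [_ [Hpos _]]]]]].
  destruct (S_x _ _ _ t HS Ht) as [H1 [H2 _]].
  assert (Hgen : forall a b, r <= a -> a <= b -> Bn phi x r t a <= Bn phi x r t b).
  { intros a b Ha Hab.
    assert (Hd := S_Bdiff phi x r t a b HS Ht ltac:(lra) ltac:(lra)).
    destruct (S_Gbounds phi x r t a b HS Ht ltac:(lra) Hab).
    assert (phi a <= phi b) by (apply Hpm; lra).
    assert (x t a <= x t b) by (apply H2; lra).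
    assert (0 <= phi a) by (apply Hpos; lra). nra. }
  destruct (Rlt_dec u r) as [Hur|Hur].
  - rewrite (S_B0 phi x r t u) by (auto; lra).
    destruct (Rlt_dec w r) as [Hwr|Hwr].
    + rewrite (S_B0 phi x r t w) by (auto; lra). lra.
    + apply Rle_trans with (Bn phi x r t r).
      * rewrite S_Br by auto. assert (0 <= phi r) by (apply Hpos; lra).
        assert (0 <= x t r) by (apply H1; lra). nra.
      * apply Hgen; lra.
  - apply Hgen; lra.
Qed.

Lemma S_B_nonneg phi x r t v : Setting phi x r -> (1 <= t)%nat -> 0 <= v -> 0 <= Bn phi x r t v.
Proof.
  intros HS Ht Hv. pose proof (S_r _ _ _ HS) as Hr.
  destruct (Rlt_dec v r).
  - rewrite (S_B0 phi x r t v) by (auto; lra). lra.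
  - apply Rle_trans with (Bn phi x r t r).
    + rewrite S_Br by auto. pose proof HS as [_ [_ [_ [_ [_ [Hpos _]]]]]].
      assert (0 <= phi r) by (apply Hpos; lra).
      assert (0 <= x t r) by (apply (S_x _ _ _ t HS Ht); lra). nra.
    + apply S_B_mono; auto; lra.
Qed.

Lemma mono_from_local (K X : R -> R) (u w : R) : u <= w ->
  (forall a b, u <= a -> a <= b -> b <= w -> X a <= X b) ->
  (forall eta, 0 < eta -> exists delta, 0 < delta /\ forall a b, u <= a -> a <= b -> b <= w -> b - a < delta ->
     K b - K a >= - eta * (X b - X a)) ->
  K u <= K w.
Proof.
  intros Huw HX HK. apply Rnot_lt_le. intro Hlt.
  assert (HXuw : X u <= X w) by (apply HX; lra).
  set (eta := (K u - K w) / (2 * (X w - X u + 1))).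
  assert (Heta : 0 < eta) by (unfold eta; apply Rdiv_lt_0_compat; lra).
  destruct (HK eta Heta) as [d [Hd Hloc]].
  destruct (nat_above ((w - u) / d)) as [n [Hn Hn0]].
  assert (HnR : 0 < INR n) by (apply lt_0_INR; lia).
  set (h := (w - u) / INR n).
  assert (Hh : 0 <= h) by (unfold h; apply Rdiv_le_0_compat; lra).
  assert (Hhd : h < d).
  { unfold h. apply Rmult_lt_reg_r with (INR n); auto.
    unfold Rdiv. rewrite Rmult_assoc, Rinv_l by lra.
    apply Rmult_lt_compat_r with (r := d) in Hn; auto. unfold Rdiv in Hn.
    rewrite Rmult_assoc, Rinv_l in Hn by lra. lra. }
  assert (Hpt : forall i, (i <= n)%nat -> u <= u + INR i * h <= w).
  { intros i Hi. split. generalize (pos_INR i); nra. apply le_INR in Hi.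
    assert (INR i * h <= INR n * h) by nra.
    assert (INR n * h = w - u) by (unfold h; field; lra). lra. }
  assert (Hind : forall i, (i <= n)%nat -> K (u + INR i * h) - K u >= - eta * (X (u + INR i * h) - X u)).
  { induction i as [|i IH]; intros Hi.
    - simpl. rewrite Rmult_0_l, Rplus_0_r. lra.
    - specialize (IH ltac:(lia)). rewrite S_INR.
      assert (H1 := Hpt i ltac:(lia)). assert (H2 := Hpt (S i) Hi). rewrite S_INR in H2.
      assert (Hl := Hloc (u + INR i * h) (u + (INR i + 1) * h) ltac:(lra) ltac:(nra) ltac:(lra) ltac:(nra)).
      lra. }
  specialize (Hind n (Nat.le_refl n)).
  replace (u + INR n * h) with w in Hind by (unfold h; field; lra).
  assert (eta * (X w - X u) < K u - K w).
  { unfold eta. apply Rle_lt_trans with ((K u - K w) / 2).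
    - unfold Rdiv. rewrite Rinv_mult.
      replace ((K u - K w) * (/ 2 * / (X w - X u + 1)) * (X w - X u)) with ((K u - K w) / 2 * ((X w - X u) / (X w - X u + 1))) by (field; lra).
      assert ((X w - X u) / (X w - X u + 1) <= 1).
      { apply Rmult_le_reg_r with (X w - X u + 1). lra.
        replace ((X w - X u) / (X w - X u + 1) * (X w - X u + 1)) with (X w - X u) by (field; lra). lra. }
      assert (0 <= (X w - X u) / (X w - X u + 1)) by (apply Rdiv_le_0_compat; lra).
      unfold Rdiv in *. nra.
    - lra. }
  lra.
Qed.

Lemma S_Kdiff phi x r t a b : Setting phi x r -> (1 <= t)%nat -> 0 <= a -> a <= b ->
  Kk phi x r t b - Kk phi x r t a >= - (x t b - x t a) * (phi b - phi a).
Proof.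
  intros HS Ht Ha Hab. pose proof (S_r _ _ _ HS) as Hr.
  pose proof HS as [_ [Hpm [_ [Hpv _]]]].
  destruct (S_x _ _ _ t HS Ht) as [H1 [H2 _]].
  unfold Kk.
  assert (HB := S_Bdiff phi x r t a b HS Ht Ha ltac:(lra)).
  destruct (S_Gbounds phi x r t a b HS Ht Ha Hab) as [HG _].
  assert (HU : U x r t b - U x r t a = RInt (x t) a b).
  { unfold U. rewrite <- (Chasles _ r a b). ring.
    apply (S_exU phi x r); auto; lra. apply (S_exU phi x r); auto; lra. }
  assert (HI : RInt (x t) a b <= (b - a) * x t b).
  { destruct (RInt_bounds (x t) a b (x t a) (x t b) Hab (S_exU phi x r t a b HS Ht Ha ltac:(lra))) as [_ Hh]; auto.
    intros z Hz; split; apply H2; lra. }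
  assert (x t a <= x t b) by (apply H2; lra).
  assert (phi a <= a) by (apply Hpv; lra).
  nra.
Qed.

Lemma S_K_mono phi x r t u w : Setting phi x r -> (1 <= t)%nat -> 0 <= u -> u <= w ->
  Kk phi x r t u <= Kk phi x r t w.
Proof.
  intros HS Ht Hu Huw.
  destruct (S_x _ _ _ t HS Ht) as [H1 [H2 _]].
  pose proof HS as [_ [Hpm [Hc _]]].
  apply mono_from_local with (X := x t); auto.
  - intros a b Ha Hab Hb. apply H2; lra.
  - intros eta Heta. destruct (phi_UC phi u w Hc Hu eta Heta) as [d [Hd HUC]].
    exists d. split; auto. intros a b Ha Hab Hb Hbd.
    assert (Hk := S_Kdiff phi x r t a b HS Ht ltac:(lra) Hab).
    assert (Habs := HUC b a ltac:(lra) ltac:(lra) ltac:(rewrite Rabs_pos_eq; lra)).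
    assert (phi a <= phi b) by (apply Hpm; lra).
    rewrite Rabs_pos_eq in Habs by lra.
    assert (x t a <= x t b) by (apply H2; lra). nra.
Qed.

Lemma S_K_nonneg phi x r t v : Setting phi x r -> (1 <= t)%nat -> 0 <= v -> 0 <= Kk phi x r t v.
Proof.
  intros HS Ht Hv. pose proof (S_r _ _ _ HS) as Hr.
  apply Rle_trans with (Kk phi x r t 0); [|apply S_K_mono; auto; lra].
  unfold Kk. rewrite (S_U0 phi x r t 0) by (auto; lra).
  destruct (Rlt_dec 0 r).
  - rewrite (S_B0 phi x r t 0) by (auto; lra). rewrite (proj2 (proj2 (proj2 (S_x _ _ _ t HS Ht))) 0) by lra. lra.
  - assert (r = 0) by lra. subst r. rewrite S_Br by auto.
    pose proof HS as [_ [_ [_ [Hpv _]]]]. assert (phi 0 <= 0) by (apply Hpv; lra).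
    assert (0 <= x t 0) by (apply (S_x _ _ _ t HS Ht); lra). nra.
Qed.

Definition b2R (b : bool) : R := if b then 1 else 0.

Fixpoint cntf (rho : nat -> bool) (k : nat) : nat :=
  match k with O => O | S k' => (cntf rho k' + if rho k' then 1 else 0)%nat end.

Definition Cterm' (X Uf Bf : nat -> R -> R) (j : nat) (b : bool) (c : nat) (v : R) : R :=
  (if b then v * X j v - Uf j v else 0) - Bf j v + INR c * (Uf (pred j) v - Uf j v).

Lemma sumR_shift f a n : sumR f (S a) n = sumR (fun i => f (S i)) a n.
Proof. revert a; induction n; intros a; [reflexivity|]. rewrite !sumR_Sl, IHn. reflexivity. Qed.

Lemma sumR_cnt (rho : nat -> bool) n : sumR (fun k => if rho k then 1 else 0) 0 n = INR (cntf rho n).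
Proof.
  induction n; [reflexivity|]. rewrite sumR_S, IHn. simpl. rewrite plus_INR.
  destruct (rho n); simpl; ring.
Qed.

Lemma rev_identity (X Uf Bf : nat -> R -> R) (V : nat -> R) (rho : nat -> bool) n :
  sumR (fun k => if rho k then V k * X (S k) (V k) - sumR (fun j => Uf (S j) (V j) - Uf (S j) (V (S j))) k (n - k) else 0) 0 n
  - sumR (fun k => Bf (S k) (V k)) 0 n
  = sumR (fun k => Cterm' X Uf Bf (S k) (rho k) (cntf rho k) (V k)) 0 n + INR (cntf rho n) * Uf n (V n).
Proof.
  set (W := fun j => Uf (S j) (V j) - Uf (S j) (V (S j))).
  induction n as [|n IH].
  - unfold sumR; simpl. ring.
  - rewrite !sumR_S. simpl (0 + n)%nat.
    rewrite (sumR_ext (fun k => if rho k then V k * X (S k) (V k) - sumR W k (S n - k) else 0)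
                      (fun k => (if rho k then V k * X (S k) (V k) - sumR W k (n - k) else 0) + (- W n) * (if rho k then 1 else 0))).
    2:{ intros i Hi. replace (S n - i)%nat with (S (n - i)) by lia. rewrite sumR_S.
        replace (i + (n - i))%nat with n by lia. destruct (rho i); ring. }
    rewrite sumR_plus, sumR_scal, sumR_cnt.
    replace (S n - n)%nat with 1%nat by lia.
    unfold sumR at 3. simpl seq. simpl map. simpl fold_right.
    unfold W in *.
    set (SA := sumR (fun k => if rho k then V k * X (S k) (V k) - sumR (fun j => Uf (S j) (V j) - Uf (S j) (V (S j))) k (n - k) else 0) 0 n) in *.
    set (SB := sumR (fun k => Bf (S k) (V k)) 0 n) in *.
    set (SC := sumR (fun k => Cterm' X Uf Bf (S k) (rho k) (cntf rho k) (V k)) 0 n) in *.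
    assert (HA : SA = SB + SC + INR (cntf rho n) * Uf n (V n)) by lra.
    rewrite HA. unfold Cterm'. simpl pred. simpl cntf. rewrite plus_INR.
    destruct (rho n); simpl INR; ring.
Qed.

Definition Ct phi x r := Cterm' x (U x r) (Bn phi x r).

Fixpoint RevL phi x r (j c : nat) (l : list (R * bool)) : R :=
  match l with
  | nil => 0
  | (v, b) :: t => Ct phi x r j b c v + RevL phi x r (S j) (if b then S c else c) t
  end.

Fixpoint cntl (l : list (R * bool)) : nat :=
  match l with nil => O | (_, b) :: t => ((if b then 1 else 0) + cntl t)%nat end.

Lemma cntl_le l : (cntl l <= length l)%nat.
Proof. induction l as [|[v b] l IH]; simpl; [lia|destruct b; lia]. Qed.

Lemma RevL_app phi x r j c A B :
  RevL phi x r j c (A ++ B) = RevL phi x r j c A + RevL phi x r (j + length A) (c + cntl A) B.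
Proof.
  revert j c; induction A as [|[v b] A IH]; intros j c; simpl.
  - rewrite Nat.add_0_r, Nat.add_0_r. ring.
  - rewrite IH. replace (S j + length A)%nat with (j + S (length A))%nat by lia.
    destruct b; simpl.
    + rewrite <- (plus_n_Sm c). ring.
    + ring.
Qed.

Lemma Ct_real_diff phi x r n c v : Setting phi x r -> (1 <= n)%nat -> 0 <= v ->
  Ct phi x r (S n) true c v - Ct phi x r n true c v <= INR (S c) * Dd x r n v - INR c * Dd x r (pred n) v.
Proof.
  intros HS Hn Hv.
  assert (H5 := S_F5 phi x r n v HS Hn Hv).
  assert (E : Ct phi x r (S n) true c v - Ct phi x r n true c v =
     (INR (S c) * Dd x r n v - INR c * Dd x r (pred n) v) - (v * (x n v - x (S n) v) - (Bn phi x r n v - Bn phi x r (S n) v))).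
  { unfold Ct, Cterm', Dd. replace (pred (S n)) with n by reflexivity.
    destruct n as [|n]; [lia|]. simpl pred. rewrite S_INR. ring. }
  lra.
Qed.

Lemma real_incr phi x r (Q : R) : Setting phi x r -> 0 <= Q ->
  forall (Rs : list R) n c, (2 <= n)%nat -> (c <= n - 1)%nat ->
  (forall v, In v Rs -> 0 <= v /\ INR (n - 1) * Dd x r (n - 1) v <= Q) ->
  RevL phi x r (S n) c (map (fun v => (v, true)) Rs) - RevL phi x r n c (map (fun v => (v, true)) Rs)
    <= INR (n - 1 - c) * Q / INR (n - 1).
Proof.
  intros HS HQ0 Rs. induction Rs as [|v Rs IH]; intros n c Hn Hc HQ.
  - simpl. assert (0 < INR (n - 1)) by (apply lt_0_INR; lia).
    assert (0 <= INR (n - 1 - c)) by apply pos_INR.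
    unfold Rdiv. rewrite Rminus_0_r. apply Rmult_le_pos. nra. left; apply Rinv_0_lt_compat; lra.
  - simpl map. cbn [RevL].
    destruct (HQ v (or_introl eq_refl)) as [Hv HQv].
    assert (IH' := IH (S n) (S c) ltac:(lia) ltac:(lia)).
    assert (HQ' : forall v', In v' Rs -> 0 <= v' /\ INR (S n - 1) * Dd x r (S n - 1) v' <= Q).
    { intros v' Hv'. destruct (HQ v' (or_intror Hv')) as [H0 H1]. split; auto.
      replace (S n - 1)%nat with (S (n - 1)) by lia.
      replace (S (n - 1) - 1)%nat with (n - 1)%nat in * by lia.
      assert (H3 := S_hyp1 phi x r (n - 1) v' HS ltac:(lia) H0).
      replace (S (n - 1)) with n in * by lia. lra. }
    specialize (IH' HQ').
    replace (S n - 1 - S c)%nat with (n - 1 - c)%nat in IH' by lia.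
    replace (S n - 1)%nat with n in IH' by lia.
    assert (Hd := Ct_real_diff phi x r n c v HS ltac:(lia) Hv).
    assert (H1 := S_hyp1 phi x r (n - 1) v HS ltac:(lia) Hv).
    replace (S (n - 1)) with n in H1 by lia.
    replace (pred n) with (n - 1)%nat in Hd by lia.
    assert (HD0 := S_D_nonneg phi x r n v HS ltac:(lia) Hv).
    set (Dn := Dd x r n v) in *. set (Dm := Dd x r (n - 1) v) in *.
    set (e := INR (n - 1 - c)) in *.
    assert (He : e = INR n - 1 - INR c).
    { unfold e. rewrite !minus_INR by lia. simpl. lra. }
    assert (Hn1 : INR (n - 1) = INR n - 1) by (rewrite minus_INR by lia; simpl; lra).
    rewrite Hn1 in *. rewrite S_INR in Hd.
    assert (Hn2 : 2 <= INR n) by (replace 2 with (INR 2) by (simpl; lra); apply le_INR; lia).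
    assert (Hc2 : INR c <= INR n - 1) by (rewrite <- Hn1; apply le_INR; lia).
    assert (Hc0 : 0 <= INR c) by apply pos_INR.
    assert (Hstep : (INR c + 1) * Dn - INR c * Dm <= e * Q / (INR n * (INR n - 1))).
    { assert (Hk1 : (INR n - 1) * ((INR c + 1) * Dn - INR c * Dm) <= e * Dn).
      { rewrite He. assert (INR c * (INR n * Dn) <= INR c * ((INR n - 1) * Dm)) by (apply Rmult_le_compat_l; lra).
        nra. }
      assert (Hk2 : e * (INR n * Dn) <= e * Q).
      { apply Rmult_le_compat_l. rewrite He; lra. lra. }
      apply Rmult_le_reg_r with (INR n * (INR n - 1)). nra.
      replace (e * Q / (INR n * (INR n - 1)) * (INR n * (INR n - 1))) with (e * Q) by (field; lra).
      nra. }
    assert (Hfin : e * Q / (INR n * (INR n - 1)) + e * Q / INR n = e * Q / (INR n - 1)) by (field; lra).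
    lra.
Qed.

Lemma Ct_fake phi x r p c y : (2 <= p)%nat ->
  Ct phi x r p false c y = - Bn phi x r p y + INR c * Dd x r (p - 1) y.
Proof.
  intros Hp. unfold Ct, Cterm', Dd. replace (pred p) with (p - 1)%nat by lia.
  replace (S (p - 1)) with p by lia. ring.
Qed.

Lemma fake_remove phi x r : Setting phi x r -> forall p c y Rs, (1 <= p)%nat -> (c <= p - 1)%nat -> 0 <= y ->
  (forall v, In v Rs -> 0 <= v <= y) ->
  RevL phi x r p c ((y, false) :: map (fun v => (v, true)) Rs) <= RevL phi x r p c (map (fun v => (v, true)) Rs).
Proof.
  intros HS p c y Rs Hp Hc Hy HRs. cbn [RevL].
  destruct (Nat.eq_dec p 1) as [->|Hp2].
  - assert (c = 0%nat) by lia. subst c.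
    destruct Rs as [|v Rs].
    + simpl. unfold Ct, Cterm'. simpl.
      assert (0 <= Bn phi x r 1 y) by (apply S_B_nonneg; auto). lra.
    + simpl map. cbn [RevL].
      destruct (HRs v (or_introl eq_refl)) as [Hv Hvy].
      assert (Hinc := real_incr phi x r (Dd x r 1 y) HS ltac:(apply (S_D_nonneg phi); auto) Rs 2 1 ltac:(lia) ltac:(lia)).
      simpl (2 - 1)%nat in Hinc. simpl (2 - 1 - 1)%nat in Hinc.
      assert (Hinc' : RevL phi x r 3 1 (map (fun v0 => (v0, true)) Rs) - RevL phi x r 2 1 (map (fun v0 => (v0, true)) Rs) <= 0).
      { assert (Hprem : forall v0 : R, In v0 Rs -> 0 <= v0 /\ INR 1 * Dd x r 1 v0 <= Dd x r 1 y).
        { intros v' Hv'. destruct (HRs v' (or_intror Hv')). split; [lra|].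
          simpl INR. rewrite Rmult_1_l. apply (S_D_mono phi); auto; lra. }
        specialize (Hinc Hprem). simpl INR in Hinc. unfold Rdiv in Hinc. rewrite !Rmult_0_l in Hinc. lra. }
      assert (H2 := S_hyp2 phi x r 1 v HS ltac:(lia) Hv). simpl INR in H2.
      assert (HB := S_B_mono phi x r 1 v y HS ltac:(lia) Hv Hvy).
      destruct (S_x phi x r 1 HS ltac:(lia)) as [_ [_ [H3 _]]]. specialize (H3 v Hv).
      assert (E : Ct phi x r 1 false 0 y + (Ct phi x r 2 true 0 v) - Ct phi x r 1 true 0 v =
         - Bn phi x r 1 y - v * (x 1%nat v - x 2%nat v) + Dd x r 1 v + Bn phi x r 1 v - Bn phi x r 2 v).
      { unfold Ct, Cterm', Dd. simpl. ring. }
      assert (0 <= v * (x 1%nat v - x 2%nat v)) by (apply Rmult_le_pos; lra).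
      lra.
  - set (Q := INR (p - 1) * Dd x r (p - 1) y).
    assert (HQ0 : 0 <= Q) by (unfold Q; apply Rmult_le_pos; [apply pos_INR|apply (S_D_nonneg phi); auto; lia]).
    assert (Hinc := real_incr phi x r Q HS HQ0 Rs p c ltac:(lia) Hc).
    assert (Hinc' : RevL phi x r (S p) c (map (fun v0 => (v0, true)) Rs) - RevL phi x r p c (map (fun v0 => (v0, true)) Rs)
                    <= INR (p - 1 - c) * Dd x r (p - 1) y).
    { eapply Rle_trans. apply Hinc.
      - intros v' Hv'. destruct (HRs v' Hv'). split; auto. unfold Q.
        apply Rmult_le_compat_l. apply pos_INR. apply (S_D_mono phi); auto. lia.
      - unfold Q. right. field. apply not_0_INR. lia. }
    rewrite Ct_fake by lia.
    assert (H2 := S_hyp2 phi x r (p - 1) y HS ltac:(lia) Hy). replace (S (p - 1)) with p in H2 by lia.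
    rewrite minus_INR in Hinc' by lia.
    lra.
Qed.

Lemma SS_remove (A B : list R) (y : R) : StronglySorted Rge (A ++ y :: B) ->
  StronglySorted Rge (A ++ B) /\ (forall v, In v B -> v <= y).
Proof.
  induction A as [|a A IH]; simpl; intros H.
  - inversion H; subst. split; auto. intros v Hv. rewrite Forall_forall in H3. specialize (H3 v Hv). lra.
  - inversion H; subst. destruct (IH H2) as [H4 H5]. split; auto.
    constructor; auto. rewrite Forall_forall in *. intros v Hv. apply H3.
    apply in_app_or in Hv. apply in_or_app. destruct Hv; [left|right; right]; auto.
Qed.

Definition nfalse (l : list (R * bool)) : nat := (length l - cntl l)%nat.

Lemma split_last_false (l : list (R * bool)) : (exists e, In e l /\ snd e = false) ->
  exists A y Rs, l = A ++ (y, false) :: map (fun v => (v, true)) Rs.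
Proof.
  induction l as [|[v b] t IH]; intros [e [He Hf]]; [destruct He|].
  destruct (Classical_Prop.classic (exists e, In e t /\ snd e = false)) as [Ht|Ht].
  - destruct (IH Ht) as [A [y [Rs ->]]]. exists ((v, b) :: A), y, Rs. reflexivity.
  - assert (Hall : t = map (fun v => (v, true)) (map fst t)).
    { clear IH He. induction t as [|[w c] t IHt]; [reflexivity|]. simpl.
      destruct c. rewrite <- IHt. reflexivity.
      intros [e' [He' Hf']]. apply Ht. exists e'. split; auto. right; auto.
      exfalso. apply Ht. exists (w, false). split; [left|]; reflexivity. }
    destruct He as [He|He].
    + subst e. simpl in Hf. subst b. exists nil, v, (map fst t). simpl. rewrite <- Hall. reflexivity.
    + exfalso. apply Ht. exists e; auto.
Qed.

Lemma cntl_app A B : cntl (A ++ B) = (cntl A + cntl B)%nat.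
Proof. induction A as [|[v b] A IH]; simpl; [reflexivity|rewrite IH; lia]. Qed.

Lemma cntl_map_true Rs : cntl (map (fun v => (v, true)) Rs) = length Rs.
Proof. induction Rs; simpl; [reflexivity|rewrite IHRs; reflexivity]. Qed.

Lemma filter_map_true Rs : filter snd (map (fun v : R => (v, true)) Rs) = map (fun v => (v, true)) Rs.
Proof. induction Rs; simpl; [reflexivity|rewrite IHRs; reflexivity]. Qed.

Lemma remove_fakes phi x r : Setting phi x r -> forall n blk, (nfalse blk <= n)%nat ->
  StronglySorted Rge (map fst blk) -> (forall e, In e blk -> 0 <= fst e) ->
  RevL phi x r 1 0 blk <= RevL phi x r 1 0 (filter snd blk).
Proof.
  intros HS n. induction n as [|n IH]; intros blk Hn Hs Hpos.
  - assert (Hall : filter snd blk = blk).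
    { unfold nfalse in Hn. clear -Hn. induction blk as [|[v b] t IHt]; [reflexivity|].
      assert (cntl t <= length t)%nat by apply cntl_le.
      simpl in *. destruct b; simpl in *.
      - rewrite IHt; [reflexivity|lia].
      - exfalso. destruct (cntl t); lia. }
    rewrite Hall. lra.
  - destruct (Classical_Prop.classic (exists e, In e blk /\ snd e = false)) as [Hf|Hf].
    + destruct (split_last_false blk Hf) as [A [y [Rs ->]]].
      set (blk' := A ++ map (fun v => (v, true)) Rs).
      assert (Hfil : filter snd (A ++ (y, false) :: map (fun v => (v, true)) Rs) = filter snd blk').
      { unfold blk'. rewrite !filter_app. reflexivity. }
      rewrite Hfil.
      rewrite map_app in Hs. simpl in Hs. destruct (SS_remove _ _ _ Hs) as [Hs' Hy].
      apply Rle_trans with (RevL phi x r 1 0 blk').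
      * unfold blk'. rewrite !RevL_app. simpl (0 + cntl A)%nat.
        apply Rplus_le_compat_l. apply fake_remove; auto.
        -- lia.
        -- assert (cntl A <= length A)%nat by apply cntl_le. lia.
        -- apply (Hpos (y, false)). apply in_or_app; right; left; reflexivity.
        -- intros v Hv. split.
           ++ apply (Hpos (v, true)). apply in_or_app; right; right. apply in_map_iff. exists v; auto.
           ++ apply Hy. rewrite map_map. simpl. rewrite map_id. exact Hv.
      * apply IH.
        -- unfold nfalse, blk' in *. rewrite !length_app, !cntl_app in *. simpl in Hn.
           rewrite !cntl_map_true, !length_map in *.
           assert (cntl A <= length A)%nat by apply cntl_le. lia.
        -- unfold blk'. rewrite map_app. exact Hs'.
        -- intros e He. apply Hpos. unfold blk' in He. apply in_app_or in He. apply in_or_app.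
           destruct He; [left|right; right]; auto.
    + assert (Hall : filter snd blk = blk).
      { clear -Hf. induction blk as [|[v b] t IHt]; [reflexivity|].
        simpl. destruct b.
        - rewrite IHt; auto. intros [e [He1 He2]]. apply Hf. exists e; split; auto. right; auto.
        - exfalso. apply Hf. exists (v, false). split; [left|]; reflexivity. }
      rewrite Hall. lra.
Qed.

Lemma Ct_honest phi x r n v : (1 <= n)%nat ->
  Ct phi x r n true (n - 1) v = Kk phi x r n v + INR (n - 1) * Dd x r (n - 1) v.
Proof.
  intros Hn. unfold Ct, Cterm', Kk, Dd. replace (pred n) with (n - 1)%nat by lia.
  replace (S (n - 1)) with n by lia. ring.
Qed.

Lemma Ct_honest_nonneg phi x r n v : Setting phi x r -> (1 <= n)%nat -> 0 <= v -> 0 <= Ct phi x r n true (n - 1) v.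
Proof.
  intros HS Hn Hv. rewrite Ct_honest by auto.
  assert (0 <= Kk phi x r n v) by (apply S_K_nonneg; auto).
  destruct (Nat.eq_dec n 1) as [->|Hn1].
  - simpl. lra.
  - assert (0 <= Dd x r (n - 1) v) by (apply (S_D_nonneg phi); auto; lia).
    assert (0 <= INR (n - 1)) by apply pos_INR. nra.
Qed.

Lemma Ct_honest_mono phi x r n u w : Setting phi x r -> (1 <= n)%nat -> 0 <= u -> u <= w ->
  Ct phi x r n true (n - 1) u <= Ct phi x r n true (n - 1) w.
Proof.
  intros HS Hn Hu Huw. rewrite !Ct_honest by auto.
  assert (Kk phi x r n u <= Kk phi x r n w) by (apply S_K_mono; auto).
  destruct (Nat.eq_dec n 1) as [->|Hn1].
  - simpl. lra.
  - assert (Dd x r (n - 1) u <= Dd x r (n - 1) w) by (apply (S_D_mono phi); auto; lia).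
    assert (0 <= INR (n - 1)) by apply pos_INR. nra.
Qed.

Lemma honest_nonneg phi x r : Setting phi x r -> forall W n, (1 <= n)%nat -> (forall v, In v W -> 0 <= v) ->
  0 <= RevL phi x r n (n - 1) (map (fun v => (v, true)) W).
Proof.
  intros HS W. induction W as [|w W IH]; intros n Hn HW; simpl; [lra|].
  replace (S (n - 1)) with (S n - 1)%nat by lia.
  assert (0 <= Ct phi x r n true (n - 1) w) by (apply Ct_honest_nonneg; auto; apply HW; left; auto).
  assert (0 <= RevL phi x r (S n) (S n - 1) (map (fun v => (v, true)) W)) by (apply IH; [lia|intros; apply HW; right; auto]).
  lra.
Qed.

Lemma honest_mono phi x r : Setting phi x r -> forall Sl W n, (1 <= n)%nat ->
  (length Sl <= length W)%nat -> (forall i, (i < length Sl)%nat -> nth i Sl 0 <= nth i W 0) ->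
  (forall v, In v Sl -> 0 <= v) -> (forall v, In v W -> 0 <= v) ->
  RevL phi x r n (n - 1) (map (fun v => (v, true)) Sl) <= RevL phi x r n (n - 1) (map (fun v => (v, true)) W).
Proof.
  intros HS Sl. induction Sl as [|s Sl IH]; intros W n Hn Hl Hi HSp HWp.
  - simpl. apply honest_nonneg; auto.
  - destruct W as [|w W]; simpl in Hl; [lia|]. simpl.
    replace (S (n - 1)) with (S n - 1)%nat by lia.
    assert (Hsw : s <= w) by (apply (Hi 0%nat); simpl; lia).
    assert (Ct phi x r n true (n - 1) s <= Ct phi x r n true (n - 1) w).
    { apply Ct_honest_mono; auto. apply HSp; left; auto. }
    idtac.
    assert (RevL phi x r (S n) (S n - 1) (map (fun v => (v, true)) Sl) <= RevL phi x r (S n) (S n - 1) (map (fun v => (v, true)) W)).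
    { apply IH; auto; try lia.
      - intros i Hi'. apply (Hi (S i)). simpl; lia.
      - intros; apply HSp; right; auto.
      - intros; apply HWp; right; auto. }
    lra.
Qed.

Definition cge (t : R) (l : list R) : nat := length (filter (fun z => if Rle_dec t z then true else false) l).

Lemma cge_perm t l l' : Permutation l l' -> cge t l = cge t l'.
Proof.
  intro H. induction H; unfold cge in *; simpl.
  - reflexivity.
  - destruct (Rle_dec t _); simpl; lia.
  - repeat (destruct (Rle_dec t _); simpl); lia.
  - lia.
Qed.

Lemma cge_app t l1 l2 : cge t (l1 ++ l2) = (cge t l1 + cge t l2)%nat.
Proof. unfold cge. rewrite filter_app, length_app. reflexivity. Qed.

Lemma cge_sorted_lo Sl : StronglySorted Rge Sl -> forall i, (i < length Sl)%nat -> (S i <= cge (nth i Sl 0%R) Sl)%nat.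
Proof.
  induction Sl as [|s Sl IH]; intros HS i Hi; simpl in Hi; [lia|].
  inversion HS; subst. unfold cge; simpl.
  destruct i as [|i].
  - simpl. destruct (Rle_dec s s); [simpl; lia|lra].
  - simpl nth. assert (Hin : In (nth i Sl 0) Sl) by (apply nth_In; lia).
    rewrite Forall_forall in H2. specialize (H2 _ Hin).
    destruct (Rle_dec (nth i Sl 0) s); [|lra]. simpl.
    specialize (IH H1 i ltac:(lia)). unfold cge in IH. lia.
Qed.

Lemma cge_zero t l : (forall v, In v l -> v < t) -> cge t l = 0%nat.
Proof.
  induction l as [|a l IH]; intros H; [reflexivity|]. unfold cge in *; simpl.
  destruct (Rle_dec t a). specialize (H a (or_introl eq_refl)). lra.
  apply IH. intros; apply H; right; auto.
Qed.

Lemma cge_sorted_hi W : StronglySorted Rge W -> forall i t, (i < length W)%nat -> nth i W 0 < t -> (cge t W <= i)%nat.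
Proof.
  induction W as [|w W IH]; intros HW i t Hi Ht; simpl in Hi; [lia|].
  inversion HW; subst. rewrite Forall_forall in H2.
  destruct i as [|i].
  - simpl in Ht. rewrite cge_zero; [lia|]. intros v [<-|Hv]; auto. specialize (H2 v Hv). lra.
  - simpl in Ht. unfold cge; simpl. specialize (IH H1 i t ltac:(lia) Ht). unfold cge in IH.
    destruct (Rle_dec t w); simpl; lia.
Qed.

Lemma order_stat Sl W rest : StronglySorted Rge Sl -> StronglySorted Rge W -> Permutation W (Sl ++ rest) ->
  (length Sl <= length W)%nat /\ (forall i, (i < length Sl)%nat -> nth i Sl 0 <= nth i W 0).
Proof.
  intros HS HW HP.
  assert (Hl : length W = (length Sl + length rest)%nat) by (rewrite (Permutation_length HP), length_app; reflexivity).
  split; [lia|]. intros i Hi.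
  apply Rnot_lt_le. intro Hlt.
  assert (H1 := cge_sorted_lo Sl HS i Hi).
  assert (H2 := cge_sorted_hi W HW i (nth i Sl 0) ltac:(lia) Hlt).
  rewrite (cge_perm _ _ _ HP), cge_app in H2. lia.
Qed.

Definition rhoL (blk : list (R * bool)) (k : nat) : bool := snd (nth k blk (0, false)).
Definition VL (blk : list (R * bool)) (k : nat) : R := fst (nth k blk (0, false)).

Lemma cntf_cons (v : R) (b : bool) t k :
  cntf (rhoL ((v, b) :: t)) (S k) = ((if b then 1 else 0) + cntf (rhoL t) k)%nat.
Proof.
  induction k as [|k IH].
  - simpl. unfold rhoL; simpl. destruct b; reflexivity.
  - change (cntf (rhoL ((v, b) :: t)) (S (S k))) with (cntf (rhoL ((v, b) :: t)) (S k) + (if rhoL ((v, b) :: t) (S k) then 1 else 0))%nat.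
    rewrite IH. change (rhoL ((v, b) :: t) (S k)) with (rhoL t k).
    change (cntf (rhoL t) (S k)) with (cntf (rhoL t) k + (if rhoL t k then 1 else 0))%nat. lia.
Qed.

Lemma RevL_sum phi x r blk : forall j c,
  RevL phi x r j c blk = sumR (fun k => Ct phi x r (j + k) (rhoL blk k) (c + cntf (rhoL blk) k) (VL blk k)) 0 (length blk).
Proof.
  induction blk as [|[v b] t IH]; intros j c; [reflexivity|].
  cbn [RevL length]. rewrite sumR_Sl, sumR_shift, IH.
  f_equal.
  - unfold rhoL, VL. simpl. rewrite Nat.add_0_r, Nat.add_0_r. reflexivity.
  - apply sumR_ext. intros k Hk. rewrite cntf_cons.
    unfold rhoL at 2, VL at 2. simpl nth.
    replace (S j + k)%nat with (j + S k)%nat by lia.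
    f_equal. change (fun k0 : nat => snd (nth k0 t (0%R, false))) with (rhoL t). destruct b; lia.
Qed.

Lemma nth_map_fst blk k r : (k < length blk)%nat -> nth k (map fst blk) r = VL blk k.
Proof.
  revert k; induction blk as [|[v b] t IH]; intros k Hk; simpl in Hk; [lia|].
  destruct k; [reflexivity|]. simpl. unfold VL; simpl. apply IH. lia.
Qed.

Lemma miner_rev_eq phi x r blk : Setting phi x r -> r = phi_inv phi 0 ->
  (forall e, In e blk -> 0 <= fst e) ->
  miner_revenue phi x blk = RevL phi x r 1 0 blk.
Proof.
  intros HS Hr Hpos. pose proof (S_r _ _ _ HS) as Hr0.
  unfold miner_revenue. cbv zeta. rewrite <- Hr.
  set (n := length blk).
  set (V := fun k => nth k (map fst blk) r).
  assert (HV : forall k, 0 <= V k).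
  { intros k. unfold V. destruct (Nat.lt_ge_cases k (length blk)) as [Hk|Hk].
    - rewrite nth_map_fst by auto. unfold VL. apply Hpos. apply nth_In. auto.
    - rewrite nth_overflow; auto. rewrite length_map; auto. }
  assert (Hpay : forall k, (k < n)%nat -> gpa_payment x r (map fst blk) k =
     V k * x (S k) (V k) - sumR (fun j => U x r (S j) (V j) - U x r (S j) (V (S j))) k (n - k)).
  { intros k Hk. unfold gpa_payment. rewrite length_map. fold n. f_equal.
    apply sumR_ext. intros j Hj. unfold U. fold (V j). fold (V (S j)).
    assert (E := Chasles (x (S j)) r (V (S j)) (V j) ltac:(apply (S_exU phi x r); auto; lia) ltac:(apply (S_exU phi x r); auto; lia)).
    unfold V in *. lra. }
  rewrite (sumR_ext _ (fun k => if rhoL blk k then V k * x (S k) (V k) - sumR (fun j => U x r (S j) (V j) - U x r (S j) (V (S j))) k (n - k) else 0)).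
  2:{ intros k Hk. unfold rhoL. rewrite Hpay by lia. reflexivity. }
  unfold gpa_burn. rewrite length_map. fold n.
  change (sumR (fun k => phi (nth k (map fst blk) r) * x (S k) (nth k (map fst blk) r) - RS_int (x (S k)) phi r (nth k (map fst blk) r)) 0 n)
    with (sumR (fun k => Bn phi x r (S k) (V k)) 0 n).
  rewrite (rev_identity x (U x r) (Bn phi x r) V (rhoL blk) n).
  assert (HVn : V n = r) by (unfold V; apply nth_overflow; rewrite length_map; unfold n; lia).
  rewrite HVn. unfold U at 2. rewrite RInt_point. unfold zero; simpl. rewrite Rmult_0_r, Rplus_0_r.
  rewrite RevL_sum. fold n. apply sumR_ext. intros k Hk.
  unfold Ct. simpl (1 + k)%nat. simpl (0 + cntf (rhoL blk) k)%nat.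
  unfold V. rewrite nth_map_fst by (unfold n in Hk; lia). reflexivity.
Qed.

Lemma Rge_trans_inst : Transitive Rge.
Proof. intros a b c H1 H2. lra. Qed.

Lemma SS_filter (l : list (R * bool)) : StronglySorted Rge (map fst l) -> StronglySorted Rge (map fst (filter snd l)).
Proof.
  induction l as [|[v b] t IH]; simpl; intros H; [constructor|].
  inversion H; subst. destruct b; simpl; auto.
  constructor; auto. rewrite Forall_forall in *. intros w Hw. apply H3.
  rewrite in_map_iff in *. destruct Hw as [e [He1 He2]]. exists e. split; auto.
  apply filter_In in He2. tauto.
Qed.

Lemma filter_true_map (l : list (R * bool)) : filter snd l = map (fun v => (v, true)) (map fst (filter snd l)).
Proof.
  induction l as [|[v b] t IH]; simpl; [reflexivity|]. destruct b; simpl; auto. rewrite <- IH. reflexivity.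
Qed.

Lemma all_true_map (l : list (R * bool)) : (forall e, In e l -> snd e = true) -> l = map (fun v => (v, true)) (map fst l).
Proof.
  induction l as [|[v b] t IH]; intros H; simpl; [reflexivity|].
  assert (b = true) by (apply (H (v, b)); left; auto). subst b. rewrite <- IH; auto.
  intros; apply H; right; auto.
Qed.

Theorem general_simple phi x r : Setting phi x r -> r = phi_inv phi 0 -> on_chain_miner_simple phi x.
Proof.
  intros HS Hr b Hb blk hon [Hs [[rest Hperm] Hfake]] [Hs2 [Hperm2 Hall]].
  assert (Hposb : forall e, In e blk -> 0 <= fst e).
  { intros [v c] He. destruct c eqn:Hc.
    - apply Hb. apply Permutation_in with (map fst (filter snd blk) ++ rest).
      + apply Permutation_sym; auto.
      + apply in_or_app. left. apply in_map_iff. exists (v, true). split; auto. apply filter_In. auto.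
    - apply (Hfake (v, false)); auto. }
  assert (Hposh : forall e, In e hon -> 0 <= fst e).
  { intros e He. apply Hb. apply Permutation_in with (map fst hon).
    + apply Permutation_sym; auto.
    + apply in_map; auto. }
  rewrite (miner_rev_eq phi x r blk HS Hr Hposb), (miner_rev_eq phi x r hon HS Hr Hposh).
  assert (HSS := Sorted_StronglySorted Rge_trans_inst Hs).
  assert (HSS2 := Sorted_StronglySorted Rge_trans_inst Hs2).
  eapply Rle_trans. apply (remove_fakes phi x r HS (nfalse blk) blk (Nat.le_refl _) HSS Hposb).
  rewrite filter_true_map. rewrite (all_true_map hon Hall).
  change 0%nat with (1 - 1)%nat.
  destruct (order_stat (map fst (filter snd blk)) (map fst hon) rest (SS_filter blk HSS) HSS2) as [Hl Hi].
  { eapply Permutation_trans. apply Permutation_sym. exact Hperm2. exact Hperm. }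
  apply honest_mono; auto.
  - intros v Hv. rewrite in_map_iff in Hv. destruct Hv as [e [<- He]]. apply Hposb. apply filter_In in He. tauto.
  - intros v Hv. rewrite in_map_iff in Hv. destruct Hv as [e [<- He]]. apply Hposh. auto.
Qed.

Lemma F_le_1 F f v : is_distribution F f -> 0 <= v -> F v <= 1.
Proof.
  intros [Hf [HF Hlim]] Hv.
  assert (Hmono : forall w, v <= w -> F v <= F w).
  { intros w Hw. destruct (HF v Hv) as [Hex1 HF1]. destruct (HF w ltac:(lra)) as [Hex2 HF2].
    rewrite HF1, HF2.
    assert (Hex3 : ex_RInt f v w) by (apply (ex_RInt_Chasles_2 f 0 v w); auto; lra).
    rewrite <- (Chasles f 0 v w Hex1 Hex3).
    assert (0 <= RInt f v w) by (apply RInt_ge_0; auto). lra. }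
  apply Rnot_lt_le. intro Hgt.
  apply is_lim_spec in Hlim. simpl in Hlim.
  destruct (Hlim (mkposreal (F v - 1) ltac:(lra))) as [M HM]. simpl in HM.
  specialize (HM (Rmax v (M + 1)) ltac:(generalize (Rmax_r v (M+1)); lra)).
  specialize (Hmono (Rmax v (M + 1)) (Rmax_l _ _)).
  rewrite Rabs_pos_eq in HM by lra. lra.
Qed.

Lemma phi_le_v F f v : is_distribution F f -> 0 <= v -> virtual_value F f v <= v.
Proof.
  intros HD Hv. unfold virtual_value.
  assert (H1 := F_le_1 F f v HD Hv). destruct HD as [Hf _]. specialize (Hf v).
  destruct (Req_dec (f v) 0) as [H0|H0].
  - unfold Rdiv. rewrite H0, Rinv_0. lra.
  - assert (0 <= (1 - F v) / f v) by (apply Rdiv_le_0_compat; lra). lra.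
Qed.

Lemma Setting_of F f x :
  is_distribution F f -> smooth_regular F f -> unbounded_virtual_value F f ->
  is_GPA (virtual_value F f) x ->
  (forall t w, (1 <= t)%nat -> 0 <= w ->
     INR t * (x t w - x (S t) w) >= INR (S t) * (x (S t) w - x (S (S t)) w)) ->
  (forall t w, (1 <= t)%nat -> phi_inv (virtual_value F f) 0 <= w ->
     INR t * RInt (fun z => x t z - x (S t) z) (phi_inv (virtual_value F f) 0) w
     <= virtual_value F f w * x (S t) w
        - RS_int (x (S t)) (virtual_value F f) (phi_inv (virtual_value F f) 0) w) ->
  Setting (virtual_value F f) x (phi_inv (virtual_value F f) 0).
Proof.
  intros HD [Hm [Hc _]] Hunb HG H1 H2.
  set (phi := virtual_value F f) in *.
  set (E := fun v => 0 <= v /\ phi v < 0).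
  destruct (Hunb 0) as [w0 [Hw0 Hpw0]]. fold phi in Hpw0.
  assert (HEb : forall v, E v -> v <= w0).
  { intros v [Hv Hpv]. destruct (Rle_dec v w0); auto. assert (phi w0 <= phi v) by (apply Hm; lra). lra. }
  assert (Hr : (exists v0, E v0) ->
     0 <= phi_inv phi 0 /\ (forall v, E v -> v <= phi_inv phi 0) /\
     (forall B, (forall v, E v -> v <= B) -> phi_inv phi 0 <= B)).
  { intros [v0 Hv0]. unfold phi_inv. fold E.
    destruct (lub_fin E v0 w0 Hv0 HEb) as [_ [Ha Hb]].
    split; [|split; auto]. apply Rle_trans with v0; [apply Hv0|apply Ha, Hv0]. }
  assert (Hr0 : ~ (exists v0, E v0) -> phi_inv phi 0 = 0).
  { intros Hne. unfold phi_inv. fold E.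
    destruct (Lub_Rbar_correct E) as [_ Hl].
    assert (Rbar_le (Lub_Rbar E) m_infty) by (apply Hl; intros v Hv; exfalso; apply Hne; exists v; auto).
    destruct (Lub_Rbar E); simpl in *; try contradiction; reflexivity. }
  assert (Hge : forall v, phi_inv phi 0 < v -> 0 <= v -> 0 <= phi v).
  { intros v Hv Hv0. apply Rnot_lt_le. intro Hlt.
    destruct (Hr (ex_intro _ v (conj Hv0 Hlt))) as [_ [Ha _]]. specialize (Ha v (conj Hv0 Hlt)). lra. }
  assert (Hr_nonneg : 0 <= phi_inv phi 0).
  { destruct (Classical_Prop.classic (exists v0, E v0)) as [He|He].
    - exact (proj1 (Hr He)).
    - rewrite Hr0; auto; lra. }
  split; [auto|]. split; [auto|]. split; [exact Hc|]. split; [intros; apply phi_le_v; auto|].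
  split; [|split; [|split; [exact HG|split; [exact H1|exact H2]]]].
  - intros v Hv Hvr. apply Rnot_le_lt. intro Hpv.
    destruct (Classical_Prop.classic (exists v0, E v0)) as [He|He].
    + destruct (Hr He) as [_ [_ Hb]].
      assert (phi_inv phi 0 <= v); [|lra].
      apply Hb. intros e [He0 Hpe]. destruct (Rle_dec e v); auto.
      assert (phi v <= phi e) by (apply Hm; lra). lra.
    + rewrite Hr0 in Hvr; auto; lra.
  - intros v Hv. destruct (Rlt_dec (phi_inv phi 0) v) as [Hlt|Hlt].
    + apply Hge; lra.
    + assert (v = phi_inv phi 0) by lra. subst v.
      apply Rnot_lt_le. intro Hneg.
      specialize (Hc (phi_inv phi 0) Hr_nonneg).
      apply filterlim_locally with (eps := mkposreal (- phi (phi_inv phi 0)) ltac:(lra)) in Hc.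
      destruct Hc as [d Hd]. simpl in Hd.
      set (y := phi_inv phi 0 + d / 2).
      assert (Hd2 : 0 < d / 2) by (generalize (cond_pos d); lra).
      assert (Hy := Hd y).
      assert (Hball : ball (phi_inv phi 0) d y).
      { unfold ball; simpl; unfold AbsRing_ball; unfold abs, minus, plus, opp; simpl.
        unfold y. replace (phi_inv phi 0 + d / 2 + - phi_inv phi 0) with (d / 2) by ring.
        rewrite Rabs_pos_eq by lra. generalize (cond_pos d); lra. }
      specialize (Hy Hball ltac:(unfold y; lra)).
      unfold ball in Hy; simpl in Hy; unfold AbsRing_ball in Hy; unfold abs, minus, plus, opp in Hy; simpl in Hy.
      apply Rabs_lt_between in Hy.
      assert (phi y < 0) by lra.
      assert (0 <= phi y) by (apply Hge; unfold y; lra). lra.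
Qed.


Theorem theorem6p11 (F f : R -> R) (x : nat -> R -> R) :
  is_distribution F f ->
  smooth_regular F f ->
  unbounded_virtual_value F f ->
  is_GPA (virtual_value F f) x ->
  (forall t w, (1 <= t)%nat -> 0 <= w ->
     INR t * (x t w - x (S t) w) >= INR (S t) * (x (S t) w - x (S (S t)) w)) ->
  (forall t w, (1 <= t)%nat -> phi_inv (virtual_value F f) 0 <= w ->
     INR t * RInt (fun z => x t z - x (S t) z) (phi_inv (virtual_value F f) 0) w
     <= virtual_value F f w * x (S t) w
        - RS_int (x (S t)) (virtual_value F f) (phi_inv (virtual_value F f) 0) w) ->
  on_chain_miner_simple (virtual_value F f) x.
Proof.
  intros HD HSR HU HG H1 H2.
  apply (general_simple (virtual_value F f) x (phi_inv (virtual_value F f) 0)).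
  - apply Setting_of; auto.
  - reflexivity.
Qed.
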